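(* The Diophantine equation $(2x)^6 - 1 = p^2 q^2 a^3$ has no solution with $x, a$ integers and $p, q$ primes. *)

(* Defs.v *)
From Stdlib Require Export ZArith Znumtheory.

(* Main.v *)
Require Import Defs.
From Stdlib Require Import ZArith Znumtheory.
Open Scope Z_scope.

From Stdlib Require Import ZArith Znumtheory Lia Psatz Ring Classical.
Open Scope Z_scope.

Definition E := (Z * Z)%type.
Definition eadd (x y : E) : E := (fst x + fst y, snd x + snd y).
Definition emul (x y : E) : E :=
  (fst x * fst y - snd x * snd y, fst x * snd y + snd x * fst y - snd x * snd y).
Definition eopp (x : E) : E := (- fst x, - snd x).
Definition esub (x y : E) : E := eadd x (eopp y).
Definition e0 : E := (0, 0).
Definition e1 : E := (1, 0).

Lemma Eth : ring_theory e0 e1 eadd emul esub eopp (@eq E).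
Proof.
  constructor; intros; repeat match goal with x : E |- _ => destruct x end;
  cbv [eadd emul eopp esub e0 e1 fst snd]; f_equal; ring.
Qed.
Add Ring Ering : Eth.

Declare Scope E_scope.
Delimit Scope E_scope with E.
Infix "+" := eadd : E_scope.
Infix "*" := emul : E_scope.
Infix "-" := esub : E_scope.
Notation "- x" := (eopp x) : E_scope.

Definition w : E := (0, 1).
Definition lam : E := esub e1 w.
Definition ofZ (z : Z) : E := (z, 0).
Definition N (x : E) : Z := fst x * fst x - fst x * snd x + snd x * snd x.
Definition conj (x : E) : E := (fst x - snd x, - snd x).

Open Scope E_scope.
Lemma test (x y : E) : (x + y) * (x - y) = x*x - y*y.
Proof. ring. Qed.
Lemma w3 : w * w * w = e1.
Proof. reflexivity. Qed.
Lemma w2 : w * w = - e1 - w.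
Proof. reflexivity. Qed.

Lemma N_mul x y : N (x * y) = (N x * N y)%Z.
Proof. destruct x, y; cbv [N emul fst snd]; ring. Qed.
Lemma N4 x : (4 * N x = (2 * fst x - snd x)^2 + 3 * (snd x)^2)%Z.
Proof. destruct x; cbv [N fst snd]; ring. Qed.
Lemma N_nonneg x : (0 <= N x)%Z.
Proof. pose proof (N4 x). nia. Qed.
Lemma N_zero x : N x = 0%Z -> x = e0.
Proof. intros H. pose proof (N4 x). rewrite H in H0. destruct x as [a b]; cbn [fst snd] in H0.
  rewrite !Z.pow_2_r in H0.
  assert (b * b = 0)%Z by nia. apply Z.mul_eq_0 in H1. assert (b = 0)%Z by lia. subst.
  assert (a * a = 0)%Z by nia. apply Z.mul_eq_0 in H1. assert (a = 0)%Z by lia. subst. reflexivity. Qed.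
Lemma N_pos x : x <> e0 -> (0 < N x)%Z.
Proof. intros H. pose proof (N_nonneg x). destruct (Z.eq_dec (N x) 0); [|lia].
  apply N_zero in e. contradiction. Qed.
Lemma conj_mul x : x * conj x = ofZ (N x).
Proof. destruct x; cbv [N emul conj ofZ fst snd]; f_equal; ring. Qed.
Lemma integral x y : x * y = e0 -> x = e0 \/ y = e0.
Proof. intros H. assert (N (x*y) = 0%Z) by (rewrite H; reflexivity).
  rewrite N_mul in H0. apply Z.mul_eq_0 in H0. destruct H0; [left|right]; now apply N_zero. Qed.
Lemma cancel x y z : x <> e0 -> x * y = x * z -> y = z.
Proof. intros Hx H. assert (x * (y - z) = e0) by (transitivity (x*y - x*z); [ring| rewrite H; ring]).
  apply integral in H0. destruct H0; [contradiction|].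
  transitivity (y - z + z); [ring| rewrite H0; ring]. Qed.

Definition dvd (d x : E) : Prop := exists k, x = d * k.
Definition unit (u : E) : Prop := exists v, u * v = e1.
Definition coprime (x y : E) : Prop := exists u v, u * x + v * y = e1.

Lemma dvd_refl x : dvd x x. Proof. exists e1; ring. Qed.
Lemma dvd_0 x : dvd x e0. Proof. exists e0; ring. Qed.
Lemma dvd_trans a b c : dvd a b -> dvd b c -> dvd a c.
Proof. intros [k Hk] [l Hl]; exists (k*l); subst; ring. Qed.
Lemma dvd_add d x y : dvd d x -> dvd d y -> dvd d (x + y).
Proof. intros [k Hk] [l Hl]; exists (k+l); subst; ring. Qed.
Lemma dvd_sub d x y : dvd d x -> dvd d y -> dvd d (x - y).
Proof. intros [k Hk] [l Hl]; exists (k-l); subst; ring. Qed.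
Lemma dvd_mull d x y : dvd d x -> dvd d (y * x).
Proof. intros [k Hk]; exists (y*k); subst; ring. Qed.
Lemma dvd_mulr d x y : dvd d x -> dvd d (x * y).
Proof. intros [k Hk]; exists (k*y); subst; ring. Qed.
Lemma dvd_mul_self d y : dvd d (d * y).
Proof. exists y; ring. Qed.
Lemma dvd_N d x : dvd d x -> (N d | N x)%Z.
Proof. intros [k Hk]; subst; rewrite N_mul; exists (N k); ring. Qed.

Lemma unit_N u : unit u <-> N u = 1%Z.
Proof. split.
  - intros [v Hv]. assert (N (u*v) = 1%Z) by (rewrite Hv; reflexivity).
    rewrite N_mul in H. apply (Z.eq_mul_1_nonneg _ _ (N_nonneg u) H).
  - intros H. exists (conj u). rewrite conj_mul, H. reflexivity. Qed.
Lemma unit_mul u v : unit u -> unit v -> unit (u * v).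
Proof. rewrite !unit_N, N_mul. lia. Qed.
Lemma unit_dvd_1 u : unit u -> forall x, dvd u x.
Proof. intros [v Hv] x. exists (v * x). transitivity ((u*v)*x); [rewrite Hv; ring| ring]. Qed.
Lemma unit_nz u : unit u -> u <> e0.
Proof. intros H e. subst. apply unit_N in H. discriminate. Qed.

Lemma coprime_sym x y : coprime x y -> coprime y x.
Proof. intros [u [v H]]; exists v, u; rewrite <- H; ring. Qed.
Lemma coprime_mul a b c : coprime a b -> coprime a c -> coprime a (b * c).
Proof. intros [u [v H]] [u' [v' H']]. exists (u*u'*a + u*v'*c + v*b*u'), (v*v').
  transitivity ((u*a + v*b)*(u'*a+v'*c)); [ring| rewrite H, H'; ring]. Qed.
Lemma gauss a b c : coprime a b -> dvd a (b * c) -> dvd a c.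
Proof. intros [u [v H]] [k Hk]. exists (u*c + v*k).
  transitivity ((u*a+v*b)*c); [rewrite H; ring| ].
  transitivity (u*a*c + v*(b*c)); [ring|rewrite Hk; ring]. Qed.
Lemma coprime_dvd_unit a b d : coprime a b -> dvd d a -> dvd d b -> unit d.
Proof. intros [u [v H]] [k Hk] [l Hl]. exists (u*k + v*l). rewrite <- H, Hk, Hl. ring. Qed.

Lemma N_conj x : N (conj x) = N x.
Proof. destruct x; cbv [N conj fst snd]; ring. Qed.

Lemma round_bound e n : (0 < n)%Z -> exists q, (- n <= 2 * (e - q * n) <= n)%Z.
Proof. intros Hn. exists ((2*e + n) / (2*n))%Z.
  pose proof (Z.div_mod (2*e+n) (2*n) ltac:(lia)).
  pose proof (Z.mod_pos_bound (2*e+n) (2*n) ltac:(lia)). nia. Qed.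

Lemma ediv x d : d <> e0 -> exists q r, x = q * d + r /\ (N r < N d)%Z.
Proof. intros Hd. pose proof (N_pos d Hd) as Hn. set (n := N d) in *.
  destruct (x * conj d) as [e f] eqn:He.
  destruct (round_bound e n Hn) as [q1 Hq1]. destruct (round_bound f n Hn) as [q2 Hq2].
  exists (q1, q2), (x - (q1,q2) * d). split; [ring|].
  assert (Hr : (x - (q1,q2)*d) * conj d = (e - q1 * n, f - q2 * n)%Z).
  { transitivity (x * conj d - (q1,q2) * (d * conj d)); [ring|].
    rewrite He, conj_mul. fold n. cbv [esub eadd eopp emul ofZ fst snd]. f_equal; ring. }
  assert (HN : (N (x - (q1,q2)*d)%E * n = N (e - q1 * n, f - q2 * n)%Z)%Z).
  { rewrite <- Hr, N_mul, N_conj. reflexivity. }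
  set (Nr := N (x - (q1,q2)*d)) in *. cbv [N fst snd] in HN.
  set (r1 := (e - q1 * n)%Z) in *. set (r2 := (f - q2*n)%Z) in *.
  assert (4 * (r1*r1 - r1*r2 + r2*r2) <= 3 * n * n)%Z by nia.
  assert (0 <= Nr)%Z by apply N_nonneg. nia. Qed.

Lemma egcd_aux : forall n x y, Z.to_nat (N y) = n ->
  exists g, dvd g x /\ dvd g y /\ exists u v, g = u * x + v * y.
Proof.
  induction n as [n IH] using (well_founded_induction lt_wf). intros x y Hn.
  destruct (classic (y = e0)) as [Hy|Hy].
  - subst. exists x. split; [apply dvd_refl|]. split; [apply dvd_0|]. exists e1, e0; ring.
  - destruct (ediv x y Hy) as [q [r [Hx Hr]]].
    pose proof (N_nonneg r).
    destruct (IH (Z.to_nat (N r)) ltac:(lia) y r eq_refl) as [g [Hg1 [Hg2 [u [v Huv]]]]].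
    exists g. split; [|split; auto].
    + rewrite Hx. apply dvd_add; auto. apply dvd_mull; auto.
    + exists v, (u - v * q). rewrite Huv, Hx. ring.
Qed.
Lemma egcd x y : exists g, dvd g x /\ dvd g y /\ exists u v, g = u * x + v * y.
Proof. eapply egcd_aux; reflexivity. Qed.

Definition irred (p : E) : Prop := (1 < N p)%Z /\ forall d, dvd d p -> N d = 1%Z \/ N d = N p.

Lemma irred_coprime p a : irred p -> ~ dvd p a -> coprime p a.
Proof. intros [Hp1 Hp] Hna. destruct (egcd p a) as [g [Hgp [Hga [u [v Huv]]]]].
  destruct (Hp g Hgp) as [H1|H1].
  - apply unit_N in H1. destruct H1 as [gi Hgi]. exists (gi * u), (gi * v).
    rewrite <- Hgi, Huv. ring.
  - exfalso. apply Hna. destruct Hgp as [h Hh].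
    assert (N h = 1%Z). { rewrite Hh, N_mul in H1. rewrite Hh in Hp1. rewrite N_mul in Hp1.
      assert (N g <> 0)%Z by (intro; rewrite H in Hp1; lia).
      apply (Z.mul_id_r (N g) (N h)); auto. }
    apply unit_N in H. destruct H as [hi Hhi].
    apply dvd_trans with g; auto. exists hi. rewrite Hh. transitivity (g * (h * hi)); [rewrite Hhi; ring|ring].
Qed.

Lemma irred_prime p a b : irred p -> dvd p (a * b) -> dvd p a \/ dvd p b.
Proof. intros Hp Hab. destruct (classic (dvd p a)); [left; auto|right].
  apply gauss with a; auto. apply irred_coprime; auto. Qed.

Lemma irred_exists_aux : forall n z, Z.to_nat (N z) = n -> (1 < N z)%Z -> exists p, irred p /\ dvd p z.
Proof.
  induction n as [n IH] using (well_founded_induction lt_wf). intros z Hn Hz.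
  destruct (classic (irred z)) as [Hi|Hi]; [exists z; split; auto; apply dvd_refl|].
  assert (exists d, dvd d z /\ N d <> 1%Z /\ N d <> N z) as [d [Hd [Hd1 Hd2]]].
  { apply NNPP. intro Hc. apply Hi. split; auto. intros d Hd.
    destruct (Z.eq_dec (N d) 1); [left; auto|]. destruct (Z.eq_dec (N d) (N z)); [right; auto|].
    exfalso; apply Hc; exists d; auto. }
  destruct Hd as [k Hk]. pose proof (N_nonneg d). pose proof (N_nonneg k).
  assert (HN : N z = (N d * N k)%Z) by (rewrite Hk; apply N_mul).
  assert (N k <> 1)%Z by (intro; rewrite H1 in HN; lia).
  assert (N d <> 0)%Z by (intro; rewrite H2 in HN; lia).
  assert (N k <> 0)%Z by (intro; rewrite H3 in HN; lia).
  destruct (IH (Z.to_nat (N d)) ltac:(nia) d eq_refl ltac:(lia)) as [p [Hp Hpd]].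
  exists p; split; auto. apply dvd_trans with d; auto. exists k; auto.
Qed.
Lemma irred_exists z : (1 < N z)%Z -> exists p, irred p /\ dvd p z.
Proof. eapply irred_exists_aux; reflexivity. Qed.

Lemma not_unit_irred p : irred p -> ~ unit p.
Proof. intros [H _] Hu. apply unit_N in Hu. lia. Qed.

Lemma irred_not_dvd_both p x y : irred p -> coprime x y -> dvd p x -> dvd p y -> False.
Proof. intros Hp Hc Hx Hy. apply (not_unit_irred p Hp). eapply coprime_dvd_unit; eauto. Qed.

Lemma cube_aux : forall n z, Z.to_nat (N z) = n -> forall x y, coprime x y -> x * y = z*z*z ->
  exists u t, unit u /\ x = u * (t*t*t).
Proof.
  induction n as [n IH] using (well_founded_induction lt_wf). intros z Hn x y Hc Hxy.
  pose proof (N_nonneg z) as Hz0.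
  destruct (Z.eq_dec (N z) 0) as [H0|H0].
  { apply N_zero in H0. subst. assert (x * y = e0) by (rewrite Hxy; ring).
    apply integral in H. destruct H as [H|H].
    - exists e1, e0. split; [exists e1; reflexivity| rewrite H; ring].
    - subst. destruct Hc as [u [v Huv]]. exists x, e1. split; [exists u; rewrite <- Huv; ring| ring]. }
  destruct (Z.eq_dec (N z) 1) as [H1|H1].
  { apply unit_N in H1. destruct H1 as [zi Hzi]. exists x, e1. split; [|ring].
    exists (y * zi * zi * zi). transitivity ((x*y)*zi*zi*zi); [ring|]. rewrite Hxy.
    transitivity ((z*zi)*(z*zi)*(z*zi)); [ring|]. rewrite Hzi; ring. }
  destruct (irred_exists z ltac:(lia)) as [p [Hp [z' Hz']]].
  assert (Hpnz : p <> e0) by (intro; subst; destruct Hp as [Hq _]; compute in Hq; discriminate).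
  assert (Hz'N : (N z' < N z)%Z).
  { rewrite Hz', N_mul. destruct Hp as [Hp _]. pose proof (N_nonneg z').
    assert (N z' <> 0)%Z. { intro Hc0. apply H0. rewrite Hz', N_mul, Hc0. ring. } nia. }
  pose proof (N_nonneg z').
  assert (Hpxy : dvd p (x * y)) by (rewrite Hxy, Hz'; exists (p*p*z'*z'*z'); ring).
  destruct (irred_prime p x y Hp Hpxy) as [Hpx|Hpy].
  - assert (Hny : ~ dvd p y) by (intro; eapply irred_not_dvd_both; eauto).
    assert (Hcp : coprime (p*p*p) y).
    { pose proof (coprime_sym _ _ (irred_coprime p y Hp Hny)) as Hc1.
      apply coprime_sym. apply coprime_mul; [apply coprime_mul|]; auto. }
    assert (Hd : dvd (p*p*p) x).
    { apply gauss with y; [auto|]. exists (z'*z'*z').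
      transitivity (x * y); [ring|]. rewrite Hxy, Hz'. ring. }
    destruct Hd as [x' Hx']. subst x.
    assert (Hppp : p*p*p <> e0).
    { intro Hc0. apply integral in Hc0. destruct Hc0 as [Hc0|Hc0]; [apply integral in Hc0; destruct Hc0|]; contradiction. }
    assert (Hx'y : x' * y = z' * z' * z').
    { apply (cancel (p*p*p)); auto. transitivity (p*p*p*x'*y); [ring|]. rewrite Hxy, Hz'. ring. }
    assert (Hc' : coprime x' y).
    { destruct Hc as [u [v Huv]]. exists (u*(p*p*p)), v. rewrite <- Huv. ring. }
    destruct (IH (Z.to_nat (N z')) ltac:(lia) z' eq_refl x' y Hc' Hx'y) as [u [t [Hu Ht]]].
    exists u, (p*t). split; auto. rewrite Ht. ring.
  - assert (Hnx : ~ dvd p x) by (intro; eapply irred_not_dvd_both; eauto).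
    assert (Hcp : coprime (p*p*p) x).
    { pose proof (coprime_sym _ _ (irred_coprime p x Hp Hnx)) as Hc1.
      apply coprime_sym. apply coprime_mul; [apply coprime_mul|]; auto. }
    assert (Hd : dvd (p*p*p) y).
    { apply gauss with x; [auto|]. exists (z'*z'*z').
      rewrite Hxy, Hz'. ring. }
    destruct Hd as [y' Hy']. subst y.
    assert (Hppp : p*p*p <> e0).
    { intro Hc0. apply integral in Hc0. destruct Hc0 as [Hc0|Hc0]; [apply integral in Hc0; destruct Hc0|]; contradiction. }
    assert (Hxy' : x * y' = z' * z' * z').
    { apply (cancel (p*p*p)); auto. transitivity (x*(p*p*p*y')); [ring|]. rewrite Hxy, Hz'. ring. }
    assert (Hc' : coprime x y').
    { destruct Hc as [u [v Huv]]. exists u, (v*(p*p*p)). rewrite <- Huv. ring. }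
    exact (IH (Z.to_nat (N z')) ltac:(lia) z' eq_refl x y' Hc' Hxy').
Qed.
Lemma cube_lemma z x y : coprime x y -> x * y = z*z*z -> exists u t, unit u /\ x = u * (t*t*t).
Proof. eapply cube_aux; reflexivity. Qed.

Ltac Ecomp := repeat match goal with x : E |- _ => destruct x end;
  cbv [emul eadd eopp esub e0 e1 w lam ofZ conj fst snd]; f_equal; ring.

Lemma units_enum u : N u = 1%Z ->
  u = (1,0)%Z \/ u = (-1,0)%Z \/ u = (0,1)%Z \/ u = (0,-1)%Z \/ u = (1,1)%Z \/ u = (-1,-1)%Z.
Proof. intros H. pose proof (N4 u). rewrite H in H0. destruct u as [a b]. cbn [fst snd] in *.
  rewrite !Z.pow_2_r in H0.
  assert (b * b <= 1)%Z by nia. assert (-1 <= b <= 1)%Z by nia.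
  assert ((2*a-b)*(2*a-b) <= 4)%Z by nia. assert (-2 <= a <= 2)%Z by nia.
  unfold N in H; cbn [fst snd] in H.
  destruct (Z.eq_dec b 0); [|destruct (Z.eq_dec b 1)]; [| |assert (b = -1)%Z by lia]; subst;
  (destruct (Z.eq_dec a 0); [|destruct (Z.eq_dec a 1); [|destruct (Z.eq_dec a (-1)); [|destruct (Z.eq_dec a 2); [|assert (a = -2)%Z by lia]]]]);
  subst; try lia; auto 10.
Qed.

Definition u3 : E := (1, 1)%Z.
Lemma three_lam : ofZ 3 = u3 * lam * lam. Proof. reflexivity. Qed.
Lemma u3_unit : unit u3. Proof. apply unit_N. reflexivity. Qed.
Lemma N_lam : N lam = 3%Z. Proof. reflexivity. Qed.

Lemma irred_lam : irred lam.
Proof. split; [rewrite N_lam; lia|]. intros d Hd. apply dvd_N in Hd. rewrite N_lam in *.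
  pose proof (N_nonneg d). assert (N d <= 3)%Z by (apply Z.divide_pos_le; auto; lia).
  destruct Hd as [k Hk]. assert (N d <> 0)%Z by (intro; rewrite H1 in Hk; lia).
  assert (N d <> 2)%Z by (intro; rewrite H2 in Hk; lia). lia. Qed.

Lemma lam_dvd_N x : dvd lam x -> (3 | N x)%Z.
Proof. intros H. rewrite <- N_lam. apply dvd_N, H. Qed.

Lemma unit_not_lam u : unit u -> ~ dvd lam u.
Proof. intros Hu H. apply lam_dvd_N in H. apply unit_N in Hu. rewrite Hu in H.
  destruct H as [k Hk]; lia. Qed.

Lemma lam_mul_not a b : ~ dvd lam a -> ~ dvd lam b -> ~ dvd lam (a * b).
Proof. intros Ha Hb H. destruct (irred_prime lam a b irred_lam H); auto. Qed.

Lemma lam_cube_not a : ~ dvd lam a -> ~ dvd lam (a*a*a).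
Proof. intros. repeat apply lam_mul_not; auto. Qed.

Lemma ofZ_not_lam n : ~ (3 | n)%Z -> ~ dvd lam (ofZ n).
Proof. intros Hn H. apply lam_dvd_N in H. unfold N, ofZ in H; cbn [fst snd] in H.
  replace (n * n - n * 0 + 0 * 0)%Z with (n * n)%Z in H by ring.
  apply prime_mult in H; [|exact prime_3]. tauto. Qed.

Lemma L1 x : dvd lam x \/ dvd lam (x - e1) \/ dvd lam (x + e1).
Proof. destruct x as [a b].
  assert (Hr : forall r, ((a + b - r) mod 3 = 0)%Z -> dvd lam ((a,b) - ofZ r)).
  { intros r Hr. apply Z.mod_divide in Hr; [|lia]. destruct Hr as [s Hs].
    exists (2*s - b, s)%Z. cbv [emul esub eadd eopp lam e1 w ofZ fst snd]. f_equal; lia. }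
  pose proof (Z.mod_pos_bound (a+b) 3 ltac:(lia)).
  assert ((a+b) mod 3 = 0 \/ (a+b) mod 3 = 1 \/ (a+b) mod 3 = 2)%Z as [H0|[H0|H0]] by lia.
  - left. replace (a,b) with ((a,b) - ofZ 0) by Ecomp. apply Hr. rewrite Zminus_mod, H0. reflexivity.
  - right; left. apply Hr. rewrite Zminus_mod, H0. reflexivity.
  - right; right. replace ((a,b) + e1) with ((a,b) - ofZ (-1)) by Ecomp. apply Hr.
    rewrite Zminus_mod, H0. reflexivity.
Qed.

Definition lam4 := lam * lam * lam * lam.

Lemma L2 x : ~ dvd lam x -> exists s, (s = e1 \/ s = - e1) /\ dvd lam (x - s) /\ dvd lam4 (x*x*x - s).
Proof. intros Hx.
  assert (Hcore : forall s t, (s = e1 \/ s = - e1) -> x = s + lam * t -> dvd lam4 (x*x*x - s)).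
  { intros s t Hs Ht.
    assert (Hq : dvd lam (t*t*t - t + lam * u3 * t + u3 * s * lam * t * t)).
    { apply dvd_add; [apply dvd_add|].
      - destruct (L1 t) as [H|[H|H]].
        + replace (t*t*t - t) with (t * (t*t - e1)) by ring. apply dvd_mulr; auto.
        + replace (t*t*t - t) with ((t - e1) * (t*t + t)) by ring. apply dvd_mulr; auto.
        + replace (t*t*t - t) with ((t + e1) * (t*t - t)) by ring. apply dvd_mulr; auto.
      - replace (lam * u3 * t) with (lam * (u3 * t)) by ring. apply dvd_mul_self.
      - replace (u3 * s * lam * t * t) with (lam * (u3 * s * t * t)) by ring. apply dvd_mul_self. }
    destruct Hq as [q Hq]. exists q. unfold lam4.
    assert (Hid : x*x*x - s = lam*lam*lam * (t*t*t - t + lam * u3 * t + u3 * s * lam * t * t)).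
    { rewrite Ht. destruct Hs; subst s; unfold u3; Ecomp. }
    rewrite Hid, Hq. ring. }
  destruct (L1 x) as [H|[H|H]]; [contradiction| |].
  - exists e1. split; [left; auto|split; auto]. destruct H as [t Ht].
    apply (Hcore e1 t); [left; auto| rewrite <- Ht; ring].
  - exists (- e1). split; [right; auto|].
    replace (x - - e1) with (x + e1) by ring. split; auto. destruct H as [t Ht].
    replace (x - - e1) with (x + e1) by ring.
    apply (Hcore (- e1) t); [right; auto| rewrite <- Ht; ring].
Qed.

Fixpoint epow (x : E) (n : nat) : E := match n with O => e1 | S n => x * epow x n end.
Lemma epow_add x a b : epow x (a + b) = epow x a * epow x b.
Proof. induction a; simpl; [ring| rewrite IHa; ring]. Qed.
Lemma epow_mul x y n : epow (x * y) n = epow x n * epow y n.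
Proof. induction n; simpl; [ring| rewrite IHn; ring]. Qed.
Lemma epow_unit u n : unit u -> unit (epow u n).
Proof. intros Hu. induction n; simpl; [exists e1; reflexivity| apply unit_mul; auto]. Qed.
Lemma epow_nz x n : x <> e0 -> epow x n <> e0.
Proof. intros Hx. induction n; simpl; [discriminate|].
  intro H. apply integral in H. destruct H; contradiction. Qed.
Lemma lam_nz : lam <> e0. Proof. discriminate. Qed.

Lemma lam_val_aux : forall n x, Z.to_nat (N x) = n -> x <> e0 ->
  exists j x', x = epow lam j * x' /\ ~ dvd lam x'.
Proof.
  induction n as [n IH] using (well_founded_induction lt_wf). intros x Hn Hx.
  destruct (classic (dvd lam x)) as [[y Hy]|H].
  - assert (Hy0 : y <> e0) by (intro; subst; apply Hx; ring).
    pose proof (N_pos y Hy0). assert (N x = 3 * N y)%Z by (rewrite Hy, N_mul; reflexivity).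
    destruct (IH (Z.to_nat (N y)) ltac:(lia) y eq_refl Hy0) as [j [x' [Hx' Hn']]].
    exists (S j), x'. split; auto. rewrite Hy, Hx'. simpl. ring.
  - exists O, x. split; auto. simpl; ring.
Qed.
Lemma lam_val x : x <> e0 -> exists j x', x = epow lam j * x' /\ ~ dvd lam x'.
Proof. eapply lam_val_aux; reflexivity. Qed.

Lemma val_uniq_lt j k X Y : (j < k)%nat -> ~ dvd lam X ->
  epow lam j * X = epow lam k * Y -> False.
Proof. intros Hjk HX H. apply HX. replace k with (j + S (k - j - 1))%nat in H by lia.
  rewrite epow_add in H. simpl in H.
  assert (X = lam * (epow lam (k - j - 1) * Y)).
  { apply (cancel (epow lam j)); [apply epow_nz, lam_nz|]. rewrite H. ring. }
  rewrite H0. apply dvd_mul_self. Qed.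

Lemma val_uniq j k X Y : ~ dvd lam X -> ~ dvd lam Y ->
  epow lam j * X = epow lam k * Y -> j = k /\ X = Y.
Proof. intros HX HY H. destruct (Nat.lt_trichotomy j k) as [Hl|[He|Hl]].
  - exfalso; exact (val_uniq_lt j k X Y Hl HX H).
  - subst. split; auto. apply (cancel (epow lam k)); auto. apply epow_nz, lam_nz.
  - exfalso; exact (val_uniq_lt k j Y X Hl HY (eq_sym H)).
Qed.

Lemma coprime_unit x u : unit u -> coprime x u.
Proof. intros [v Hv]. exists e0, v. rewrite <- Hv. ring. Qed.

Lemma coprime_lin x y X Y a1 b1 a2 b2 : coprime x y -> x = a1 * X + b1 * Y -> y = a2 * X + b2 * Y ->
  coprime X Y.
Proof. intros [u [v H]] Hx Hy. exists (u*a1 + v*a2), (u*b1 + v*b2). rewrite <- H, Hx, Hy. ring. Qed.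

Lemma lam_dvd_pow k : (1 <= k)%nat -> dvd lam (epow lam k).
Proof. intros. destruct k; [lia|]. simpl. apply dvd_mul_self. Qed.
Lemma lam2_dvd_pow k : (2 <= k)%nat -> dvd (lam*lam) (epow lam k).
Proof. intros. destruct k as [|[|k]]; try lia. simpl. exists (epow lam k). ring. Qed.

Lemma unit_pm1 e s1 s2 : unit e -> (s1 = e1 \/ s1 = - e1) -> (s2 = e1 \/ s2 = - e1) ->
  dvd (lam*lam) (s1 + e*s2) -> e = e1 \/ e = - e1.
Proof. intros He Hs1 Hs2 H. apply unit_N in He.
  destruct (units_enum e He) as [E|[E|[E|[E|[E|E]]]]]; subst e;
  destruct Hs1; destruct Hs2; subst; try (left; reflexivity); try (right; reflexivity);
  apply dvd_N in H; destruct H as [q Hq]; cbv [N emul eadd eopp esub e1 lam w fst snd] in Hq; lia.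
Qed.

Lemma lam4_lam2 x : dvd lam4 x -> dvd (lam*lam) x.
Proof. intros [q Hq]. exists (lam*lam*q). rewrite Hq. unfold lam4. ring. Qed.

Lemma core A B C eps g k : (2 <= k)%nat -> unit eps -> ~ dvd lam g ->
  coprime A B -> coprime B C -> coprime A C -> A + w*B + w*w*C = e0 ->
  A*B*C = eps * epow lam k * (g*g*g) -> dvd lam A ->
  exists s t r e', unit e' /\ ~ dvd lam s /\ ~ dvd lam t /\ ~ dvd lam r /\ coprime s t /\
    s*s*s + t*t*t = e' * epow lam k * (r*r*r).
Proof.
  intros Hk Heps Hg HAB HBC HAC Hrel Hprod HA.
  assert (HB : ~ dvd lam B) by (intro H; apply (not_unit_irred lam irred_lam); exact (coprime_dvd_unit A B lam HAB HA H)).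
  assert (HC : ~ dvd lam C) by (intro H; apply (not_unit_irred lam irred_lam); exact (coprime_dvd_unit A C lam HAC HA H)).
  assert (HA0 : A <> e0).
  { intro; subst A. apply Hg. assert (Hz : eps * epow lam k * (g*g*g) = e0) by (rewrite <- Hprod; ring).
    apply integral in Hz. destruct Hz as [Hz|Hz].
    - apply integral in Hz. destruct Hz as [Hz|Hz]; exfalso; [apply (unit_nz eps Heps Hz)|apply (epow_nz lam k lam_nz Hz)].
    - apply integral in Hz. destruct Hz as [Hz|Hz]; [apply integral in Hz; destruct Hz as [Hz|Hz]|]; subst; apply dvd_0. }
  destruct (lam_val A HA0) as [j [A' [HA' HnA']]].
  assert (Hv : epow lam j * (A' * B * C) = epow lam k * (eps * (g*g*g))).
  { transitivity (A*B*C); [rewrite HA'; ring| rewrite Hprod; ring]. }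
  apply val_uniq in Hv; [|repeat apply lam_mul_not; auto| apply lam_mul_not; [apply unit_not_lam; auto| apply lam_cube_not; auto]].
  destruct Hv as [Hjk Hv]. subst j.
  destruct Heps as [ei Hei].
  assert (Hei_u : unit ei) by (exists eps; rewrite <- Hei; ring).
  assert (HA'B : coprime A' B) by (apply (coprime_lin A B A' B (epow lam k) e0 e0 e1); [auto| rewrite HA'; ring| ring]).
  assert (HA'C : coprime A' C) by (apply (coprime_lin A C A' C (epow lam k) e0 e0 e1); [auto| rewrite HA'; ring| ring]).
  assert (Hg3 : forall X Y Z, X*Y*Z = A'*B*C -> X * (Y * Z * ei) = g*g*g).
  { intros X Y Z HXYZ. transitivity ((X*Y*Z) * ei); [ring|]. rewrite HXYZ, Hv.
    transitivity ((eps*ei) * (g*g*g)); [ring| rewrite Hei; ring]. }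
  destruct (cube_lemma g A' (B*C*ei)) as [ea [r [Hea Hr]]].
  { apply coprime_mul; [apply coprime_mul|]; auto. apply coprime_unit; auto. }
  { apply Hg3. ring. }
  destruct (cube_lemma g B (A'*C*ei)) as [eb [s [Heb Hs]]].
  { apply coprime_mul; [apply coprime_mul|]; auto. apply coprime_sym; auto. apply coprime_unit; auto. }
  { apply Hg3. ring. }
  destruct (cube_lemma g C (A'*B*ei)) as [ec [t [Hec Ht]]].
  { apply coprime_mul; [apply coprime_mul|]; apply coprime_sym; auto. apply coprime_sym, coprime_unit; auto. }
  { apply Hg3. ring. }
  assert (Hwb : unit (w * eb)) by (apply unit_mul; auto; apply unit_N; reflexivity).
  destruct Hwb as [f Hf].
  assert (Hfu : unit f) by (exists (w*eb); rewrite <- Hf; ring).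
  set (e' := f*w*w*ec).
  assert (He'u : unit e') by (unfold e'; repeat apply unit_mul; auto; apply unit_N; reflexivity).
  assert (Hrel2 : s*s*s + e' * (t*t*t) = (- (f*ea)) * epow lam k * (r*r*r)).
  { transitivity (f * (w*eb) * (s*s*s) + e' * (t*t*t)); [replace (f*(w*eb)) with e1 by (rewrite <- Hf; ring); ring|].
    transitivity (f * (A + w*B + w*w*C) - f * A); [unfold e'; rewrite Hs, Ht; ring|].
    rewrite Hrel, HA', Hr. ring. }
  assert (Hns : ~ dvd lam s) by (intro H; apply HB; rewrite Hs; apply dvd_mull; apply dvd_mulr; apply dvd_mulr; auto).
  assert (Hnt : ~ dvd lam t) by (intro H; apply HC; rewrite Ht; apply dvd_mull; apply dvd_mulr; apply dvd_mulr; auto).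
  assert (Hnr : ~ dvd lam r) by (intro H; apply HnA'; rewrite Hr; apply dvd_mull; apply dvd_mulr; apply dvd_mulr; auto).
  assert (Hst : coprime s t).
  { destruct HBC as [u [v Huv]]. exists (u*eb*s*s), (v*ec*t*t). rewrite <- Huv, Hs, Ht. ring. }
  destruct (L2 s Hns) as [s1 [Hs1 [_ Hs1']]]. destruct (L2 t Hnt) as [s2 [Hs2 [_ Hs2']]].
  assert (Hd : dvd (lam*lam) (s1 + e' * s2)).
  { replace (s1 + e' * s2) with ((s*s*s + e'*(t*t*t)) - (s*s*s - s1) - e' * (t*t*t - s2)) by ring.
    apply dvd_sub; [apply dvd_sub|].
    - rewrite Hrel2. apply dvd_mulr. apply dvd_mull. apply lam2_dvd_pow; auto.
    - apply lam4_lam2; auto.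
    - apply dvd_mull, lam4_lam2; auto. }
  assert (Hfe : unit (- (f*ea))) by (replace (- (f*ea)) with ((- e1) * (f * ea)) by ring; apply unit_mul; [apply unit_N; reflexivity| apply unit_mul; auto]).
  destruct (unit_pm1 e' s1 s2 He'u Hs1 Hs2 Hd) as [Ee|Ee]; rewrite Ee in Hrel2.
  - exists s, t, r, (- (f*ea)). repeat split; auto. rewrite <- Hrel2. ring.
  - exists s, (- t), r, (- (f*ea)). repeat split; auto.
    + intro H. apply Hnt. replace t with ((- e1) * (- t)) by ring. apply dvd_mull; auto.
    + destruct Hst as [u [v Huv]]. exists u, (- v). rewrite <- Huv. ring.
    + rewrite <- Hrel2. ring.
Qed.

Lemma two_not_lam s1 : (s1 = e1 \/ s1 = - e1) -> ~ dvd lam (s1 + s1).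
Proof. intros Hs H. apply lam_dvd_N in H. destruct H as [q Hq].
  destruct Hs; subst; cbv [N eadd eopp e1 fst snd] in Hq; lia. Qed.

Theorem descent : forall m xi eta g eps, (1 <= m)%nat -> (m mod 3 <> 1)%nat -> unit eps ->
  ~ dvd lam xi -> ~ dvd lam eta -> ~ dvd lam g -> coprime xi eta ->
  xi*xi*xi + eta*eta*eta = eps * epow lam m * (g*g*g) -> False.
Proof.
  induction m as [m IH] using (well_founded_induction lt_wf).
  intros xi eta g eps Hm1 Hm3 Heps Hxi Heta Hg Hc Heq.
  destruct (L2 xi Hxi) as [s1 [Hs1 [Hs1a Hs1b]]]. destruct (L2 eta Heta) as [s2 [Hs2 [Hs2a Hs2b]]].
  assert (HlamR : dvd lam (xi*xi*xi + eta*eta*eta)).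
  { rewrite Heq. apply dvd_mulr, dvd_mull, lam_dvd_pow; auto. }
  assert (Hl4 : dvd lam lam4) by (exists (lam*lam*lam); unfold lam4; ring).
  assert (Hss : dvd lam (s1 + s2)).
  { replace (s1 + s2) with ((xi*xi*xi + eta*eta*eta) - (xi*xi*xi - s1) - (eta*eta*eta - s2)) by ring.
    apply dvd_sub; [apply dvd_sub|]; auto; eapply dvd_trans; eauto. }
  assert (Hs21 : s2 = - s1).
  { destruct Hs1, Hs2; subst; auto; exfalso;
    first [exact (two_not_lam _ (or_introl eq_refl) Hss) | exact (two_not_lam _ (or_intror eq_refl) Hss)]. }
  subst s2.
  assert (Hl4d : dvd lam4 (xi*xi*xi + eta*eta*eta)).
  { replace (xi*xi*xi + eta*eta*eta) with ((xi*xi*xi - s1) + (eta*eta*eta - - s1)) by ring.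
    apply dvd_add; auto. }
  assert (Hm4 : (4 <= m)%nat).
  { destruct (Nat.lt_ge_cases m 4) as [Hlt|]; auto. exfalso. destruct Hl4d as [q Hq].
    apply (val_uniq_lt m 4 (eps * (g*g*g)) q Hlt).
    - apply lam_mul_not; [apply unit_not_lam; auto| apply lam_cube_not; auto].
    - transitivity (eps * epow lam m * (g*g*g)); [ring|]. rewrite <- Heq, Hq.
      unfold lam4. simpl. ring. }
  assert (Hm5 : (5 <= m)%nat) by (destruct (Nat.eq_dec m 4); [subst; simpl in Hm3; lia| lia]).
  set (k := (m - 3)%nat).
  assert (Hxe : dvd lam (xi + eta)).
  { replace (xi + eta) with ((xi - s1) + (eta - - s1)) by ring. apply dvd_add; auto. }
  destruct Hxe as [A HA].
  assert (Hxi2 : xi = lam * A - eta) by (rewrite <- HA; ring). clear HA. subst xi.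
  set (B := A - eta). set (C := A + w*w*eta).
  assert (Hprod : A * B * C = eps * epow lam k * (g*g*g)).
  { apply (cancel (lam*lam*lam)); [intro H; apply integral in H; destruct H as [H|H]; [apply integral in H; destruct H|]; discriminate|].
    transitivity ((lam*A - eta)*(lam*A-eta)*(lam*A-eta) + eta*eta*eta); [unfold B, C; Ecomp|].
    rewrite Heq. replace m with (3 + k)%nat by lia. rewrite epow_add. simpl. ring. }
  assert (Hrel : A + w*B + w*w*C = e0) by (unfold B, C; Ecomp).
  assert (HAB : coprime A B) by (apply (coprime_lin _ _ A B (- w) e1 e1 (- e1) Hc); unfold B; Ecomp).
  assert (HBC : coprime B C) by (apply (coprime_lin _ _ B C (- w) e1 (w*w) (- (w*w)) Hc); unfold B, C; Ecomp).
  assert (HAC : coprime A C) by (apply (coprime_lin _ _ A C e1 (- w) (- w) w Hc); unfold C; Ecomp).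
  assert (Hk2 : (2 <= k)%nat) by lia.
  assert (HlABC : dvd lam (A*B*C)) by (rewrite Hprod; apply dvd_mulr, dvd_mull, lam_dvd_pow; lia).
  assert (Hfin : exists s t r e', unit e' /\ ~ dvd lam s /\ ~ dvd lam t /\ ~ dvd lam r /\ coprime s t /\
    s*s*s + t*t*t = e' * epow lam k * (r*r*r)).
  { destruct (irred_prime lam (A*B) C irred_lam HlABC) as [H|H];
      [destruct (irred_prime lam A B irred_lam H) as [H'|H']|].
    - exact (core A B C eps g k Hk2 Heps Hg HAB HBC HAC Hrel Hprod H').
    - apply (core B C A eps g k Hk2 Heps Hg HBC (coprime_sym _ _ HAC) (coprime_sym _ _ HAB)); auto.
      + unfold B, C; Ecomp.
      + rewrite <- Hprod; ring.
    - apply (core C A B eps g k Hk2 Heps Hg (coprime_sym _ _ HAC) HAB (coprime_sym _ _ HBC)); auto.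
      + unfold B, C; Ecomp.
      + rewrite <- Hprod; ring. }
  destruct Hfin as [s [t [r [e' [He' [Hs [Ht [Hr [Hst Heq']]]]]]]]].
  apply (IH k ltac:(lia) s t r e'); auto; [lia|].
  intro H. apply Hm3. unfold k in H. clear -H Hm5.
  replace m with ((m - 3) + 1 * 3)%nat by lia. rewrite Nat.Div0.mod_add. auto.
Qed.

Open Scope Z_scope.
Definition zcop (x y : Z) : Prop := exists u v, u * x + v * y = 1.

Lemma zcop_sym x y : zcop x y -> zcop y x.
Proof. intros [u [v H]]; exists v, u; lia. Qed.
Lemma zcop_mul a b c : zcop a b -> zcop a c -> zcop a (b * c).
Proof. intros [u [v H]] [u' [v' H']]. exists (u*u'*a + u*v'*c + v*b*u'), (v*v').
  transitivity ((u*a + v*b)*(u'*a+v'*c)); [ring| rewrite H, H'; ring]. Qed.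
Lemma zgauss a b c : zcop a b -> (a | b * c) -> (a | c).
Proof. intros [u [v H]] [k Hk]. exists (u*c + v*k).
  transitivity ((u*a+v*b)*c); [rewrite H; ring| ].
  transitivity (u*a*c + v*(b*c)); [ring| rewrite Hk; ring]. Qed.
Lemma zprime_cop p y : prime p -> ~ (p | y) -> zcop p y.
Proof. intros Hp Hy. apply prime_rel_prime in Hy; auto. apply rel_prime_bezout in Hy.
  destruct Hy as [u v H]. exists u, v. exact H. Qed.

Lemma prime_div_exists : forall n, 1 < n -> exists p, prime p /\ (p | n).
Proof. intros n Hn. assert (H0 : 0 <= n) by lia. revert Hn. pattern n. apply Z_lt_induction; [|exact H0].
  intros x IH Hx. destruct (prime_dec x) as [Hp|Hp]; [exists x; split; auto; apply Z.divide_refl|].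
  destruct (not_prime_divide x Hx Hp) as [m [Hm Hmd]].
  destruct (IH m ltac:(lia) ltac:(lia)) as [p [Hp' Hpd]]. exists p; split; auto. eapply Z.divide_trans; eauto. Qed.

Lemma zcube_aux : forall n c, Z.abs_nat c = n -> forall x y, zcop x y -> x * y = c*c*c ->
  exists d, x = d*d*d.
Proof.
  induction n as [n IH] using (well_founded_induction lt_wf). intros c Hn x y Hc Hxy.
  destruct (Z.eq_dec c 0) as [H0|H0].
  { subst. assert (x * y = 0) by lia. apply Z.mul_eq_0 in H. destruct H as [H|H].
    - exists 0; subst; ring.
    - subst. destruct Hc as [u [v Huv]]. assert (u * x = 1) by lia.
      assert (x = 1 \/ x = -1) as [E|E] by (apply Z.eq_mul_1 in H; lia); [exists 1|exists (-1)]; lia. }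
  destruct (Z.eq_dec (Z.abs c) 1) as [H1|H1].
  { assert (c*c*c = 1 \/ c*c*c = -1) by (destruct (Z.abs_spec c) as [[_ E]|[_ E]]; nia).
    assert (x = 1 \/ x = -1) as [E|E].
    { destruct H as [H|H]; rewrite H in Hxy; [apply Z.eq_mul_1 in Hxy; lia|].
      assert (x * (-y) = 1) by lia. apply Z.eq_mul_1 in H2; lia. }
    - exists 1; lia. - exists (-1); lia. }
  destruct (prime_div_exists (Z.abs c) ltac:(lia)) as [p [Hp Hpc]].
  rewrite Z.divide_abs_r in Hpc. destruct Hpc as [c' Hc'].
  assert (Hp1 : 1 < p) by (destruct Hp; auto).
  assert (Hc'0 : c' <> 0) by (intro; subst; lia).
  assert (Hlt : (Z.abs_nat c' < n)%nat).
  { subst n. apply Nat2Z.inj_lt. rewrite !Nat2Z.inj_abs_nat. rewrite Hc', Z.abs_mul.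
    rewrite (Z.abs_eq p) by lia. assert (0 < Z.abs c') by (apply Z.abs_pos; auto). nia. }
  assert (Hpxy : (p | x * y)) by (rewrite Hxy, Hc'; exists (p*p*c'*c'*c'); ring).
  destruct (prime_mult p Hp x y Hpxy) as [Hpx|Hpy].
  - assert (Hny : ~ (p | y)).
    { intro Hy. destruct Hc as [u [v Huv]]. assert (p | 1) by (rewrite <- Huv; apply Z.divide_add_r; apply Z.divide_mul_r; auto).
      apply Z.divide_1_r in H; lia. }
    assert (Hcp : zcop (p*p*p) y) by (pose proof (zprime_cop p y Hp Hny) as Hc1; apply zcop_sym; apply zcop_mul; [apply zcop_mul|]; apply zcop_sym; auto).
    assert (Hd : (p*p*p | x)) by (apply zgauss with y; auto; exists (c'*c'*c'); rewrite Z.mul_comm, Hxy, Hc'; ring).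
    destruct Hd as [x' Hx']. subst x.
    assert (Hx'y : x' * y = c'*c'*c').
    { apply (Z.mul_reg_l _ _ (p*p*p)); [nia|]. rewrite Hc' in Hxy. nia. }
    assert (Hc2 : zcop x' y) by (destruct Hc as [u [v Huv]]; exists (u*(p*p*p)), v; lia).
    destruct (IH _ Hlt c' eq_refl x' y Hc2 Hx'y) as [d Hd]. exists (d*p). subst; ring.
  - assert (Hnx : ~ (p | x)).
    { intro Hx. destruct Hc as [u [v Huv]]. assert (p | 1) by (rewrite <- Huv; apply Z.divide_add_r; apply Z.divide_mul_r; auto).
      apply Z.divide_1_r in H; lia. }
    assert (Hcp : zcop (p*p*p) x) by (pose proof (zprime_cop p x Hp Hnx) as Hc1; apply zcop_sym; apply zcop_mul; [apply zcop_mul|]; apply zcop_sym; auto).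
    assert (Hd : (p*p*p | y)) by (apply zgauss with x; auto; exists (c'*c'*c'); rewrite Hxy, Hc'; ring).
    destruct Hd as [y' Hy']. subst y.
    assert (Hxy' : x * y' = c'*c'*c').
    { apply (Z.mul_reg_l _ _ (p*p*p)); [nia|]. rewrite Hc' in Hxy. nia. }
    assert (Hc2 : zcop x y') by (destruct Hc as [u [v Huv]]; exists u, (v*(p*p*p)); lia).
    exact (IH _ Hlt c' eq_refl x y' Hc2 Hxy').
Qed.
Lemma zcube x y c : zcop x y -> x * y = c*c*c -> exists d, x = d*d*d.
Proof. intros; eapply zcube_aux; eauto. Qed.

Open Scope Z_scope.

Lemma cube_mod9 n : ~ (3 | n) -> exists t, n*n*n = 9*t + 1 \/ n*n*n = 9*t - 1.
Proof. intros Hn. pose proof (Z.div_mod n 9 ltac:(lia)). pose proof (Z.mod_pos_bound n 9 ltac:(lia)).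
  set (q := n / 9) in *. set (r := n mod 9) in *.
  assert (r <> 0 /\ r <> 3 /\ r <> 6).
  { repeat split; intro E; apply Hn; rewrite H, E; [exists (3*q)|exists (3*q+1)|exists (3*q+2)]; ring. }
  assert (r = 1 \/ r = 2 \/ r = 4 \/ r = 5 \/ r = 7 \/ r = 8) by lia.
  rewrite H. destruct H2 as [E|[E|[E|[E|[E|E]]]]]; rewrite E;
  [exists (81*q*q*q + 27*q*q*1 + 3*q*1*1 + 0); left
  |exists (81*q*q*q + 27*q*q*2 + 3*q*2*2 + 1); right
  |exists (81*q*q*q + 27*q*q*4 + 3*q*4*4 + 7); left
  |exists (81*q*q*q + 27*q*q*5 + 3*q*5*5 + 14); right
  |exists (81*q*q*q + 27*q*q*7 + 3*q*7*7 + 38); left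
  |exists (81*q*q*q + 27*q*q*8 + 3*q*8*8 + 57); right]; ring.
Qed.

Fixpoint p3 (j : nat) : Z := match j with O => 1 | S j => 3 * p3 j end.
Lemma val3 : forall n, n <> 0 -> exists j n', n = p3 j * n' /\ ~ (3 | n').
Proof.
  assert (H : forall k n, Z.abs_nat n = k -> n <> 0 -> exists j n', n = p3 j * n' /\ ~ (3 | n')).
  { induction k as [k IH] using (well_founded_induction lt_wf). intros n Hk Hn.
    destruct (classic (3 | n)) as [[m Hm]|Hm].
    - assert (m <> 0) by (intro; subst; lia).
      assert (Z.abs_nat m < k)%nat by (subst k n; apply Nat2Z.inj_lt; rewrite !Nat2Z.inj_abs_nat, Z.abs_mul; simpl; pose proof (Z.abs_pos m); lia).
      destruct (IH _ H0 m eq_refl H) as [j [n' [E Hn']]]. exists (S j), n'. split; [rewrite Hm, E; cbn [p3]; ring| exact Hn'].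
    - exists O, n. split; [cbn [p3]; ring| exact Hm]. }
  intros; eapply H; eauto.
Qed.
Lemma p3_pos j : 0 < p3 j. Proof. induction j; cbn [p3]; lia. Qed.

Open Scope E_scope.
Lemma ofZ_add a b : ofZ (a + b)%Z = ofZ a + ofZ b. Proof. cbv [ofZ eadd fst snd]. f_equal. Qed.
Lemma ofZ_mul a b : ofZ (a * b)%Z = ofZ a * ofZ b. Proof. cbv [ofZ emul fst snd]. f_equal; ring. Qed.
Lemma ofZ_sub a b : ofZ (a - b)%Z = ofZ a - ofZ b. Proof. cbv [ofZ esub eadd eopp fst snd]. f_equal; ring. Qed.
Lemma ofZ_p3 j : ofZ (p3 j) = epow u3 j * epow lam (j + j).
Proof. induction j; [reflexivity|]. cbn [p3]. rewrite ofZ_mul, IHj, three_lam.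
  replace (S j + S j)%nat with (S (S (j + j))) by lia. simpl. ring. Qed.
Lemma coprime_ofZ x y : zcop x y -> coprime (ofZ x) (ofZ y).
Proof. intros [u [v H]]. exists (ofZ u), (ofZ v). rewrite <- !ofZ_mul, <- ofZ_add, H. reflexivity. Qed.

Lemma cube_val j n : ofZ (p3 j * n) * ofZ (p3 j * n) * ofZ (p3 j * n) =
  (epow u3 j * epow u3 j * epow u3 j) * epow lam (6 * j) * (ofZ n * ofZ n * ofZ n).
Proof. rewrite ofZ_mul, ofZ_p3. replace (6 * j)%nat with ((j + j) + (j + j) + (j + j))%nat by lia.
  rewrite !epow_add. ring. Qed.

Lemma mod3_6j j : ((6 * j) mod 3 = 0)%nat.
Proof. replace (6 * j)%nat with (0 + (2 * j) * 3)%nat by lia. rewrite Nat.Div0.mod_add. reflexivity. Qed.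
Lemma mod3_6j2 j : ((2 + 6 * j) mod 3 = 2)%nat.
Proof. replace (2 + 6 * j)%nat with (2 + (2 * j) * 3)%nat by lia. rewrite Nat.Div0.mod_add. reflexivity. Qed.

Close Scope E_scope.

Lemma G1 X b : X*X*X + (1-X)*(1-X)*(1-X) = b*b*b -> (3 | X) -> X = 0.
Proof. intros H H3. destruct (Z.eq_dec X 0); auto. exfalso.
  destruct (val3 X n) as [j [X' [HX HX']]].
  destruct j as [|j]. { cbn [p3] in HX. rewrite Z.mul_1_l in HX. subst X'. contradiction. }
  assert (Hb : ~ (3 | b)).
  { intro Hb. assert (3 | 1).
    { replace 1 with (b*b*b - 3 * (X*X - X)) by nia. apply Z.divide_sub_r; [|apply Z.divide_factor_l].
      apply Z.divide_mul_r; auto. }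
    apply Z.divide_1_r in H0; lia. }
  assert (HX1 : ~ (3 | X - 1)).
  { intro H1. assert (3 | 1) by (replace 1 with (X - (X - 1)) by ring; apply Z.divide_sub_r; auto).
    apply Z.divide_1_r in H0; lia. }
  apply (descent (6 * S j) (ofZ b) (ofZ (X - 1)) (ofZ X') (epow u3 (S j) * epow u3 (S j) * epow u3 (S j))%E).
  - lia.
  - rewrite mod3_6j. lia.
  - repeat apply unit_mul; try apply epow_unit; apply u3_unit.
  - apply ofZ_not_lam; auto.
  - apply ofZ_not_lam; auto.
  - apply ofZ_not_lam; auto.
  - apply coprime_ofZ. exists (b*b), (-3*X). nia.
  - rewrite <- cube_val, <- HX, <- !ofZ_mul, <- ofZ_add. f_equal. nia.
Qed.

Lemma F1core X b : X*X*X + (1-X)*(1-X)*(1-X) = b*b*b -> X = 0 \/ X = 1.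
Proof. intros H.
  destruct (classic (3 | X)) as [H3|H3]; [left; eapply G1; eauto|].
  destruct (classic (3 | 1 - X)) as [H4|H4].
  { right. assert (1 - X = 0); [|lia]. apply (G1 (1 - X) b); auto.
    replace (1 - (1 - X)) with X by ring. lia. }
  assert (Hb : ~ (3 | b)).
  { intro Hb. assert (3 | 1).
    { replace 1 with (b*b*b - 3 * (X*X - X)) by nia. apply Z.divide_sub_r; [|apply Z.divide_factor_l].
      apply Z.divide_mul_r; auto. }
    apply Z.divide_1_r in H0; lia. }
  destruct (cube_mod9 X H3) as [t1 Ht1]. destruct (cube_mod9 _ H4) as [t2 Ht2].
  destruct (cube_mod9 b Hb) as [t3 Ht3]. exfalso. lia.
Qed.

Lemma F3core v w u : zcop v w -> v*v*v + w*w*w = 3*(u*u*u) -> u = 0.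
Proof. intros Hc H. destruct (Z.eq_dec u 0); auto. exfalso.
  assert (Hv : ~ (3 | v)).
  { intro Hv. assert (3 | w*w*w) by (replace (w*w*w) with (3*(u*u*u) - v*v*v) by lia;
      apply Z.divide_sub_r; [apply Z.divide_factor_l| repeat apply Z.divide_mul_l; auto]).
    assert (3 | w) by (repeat (apply prime_mult in H0; [|exact prime_3]; destruct H0 as [H0|H0]); auto).
    destruct Hc as [a [c Hac]]. assert (3 | 1) by (rewrite <- Hac; apply Z.divide_add_r; apply Z.divide_mul_r; auto).
    apply Z.divide_1_r in H2; lia. }
  assert (Hw : ~ (3 | w)).
  { intro Hw. assert (3 | v*v*v) by (replace (v*v*v) with (3*(u*u*u) - w*w*w) by lia;
      apply Z.divide_sub_r; [apply Z.divide_factor_l| repeat apply Z.divide_mul_l; auto]).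
    assert (3 | v) by (repeat (apply prime_mult in H0; [|exact prime_3]; destruct H0 as [H0|H0]); auto).
    contradiction. }
  destruct (val3 u n) as [j [u' [Hu Hu']]].
  apply (descent (2 + 6 * j) (ofZ v) (ofZ w) (ofZ u') (u3 * (epow u3 j * epow u3 j * epow u3 j))%E).
  - lia.
  - rewrite mod3_6j2. lia.
  - repeat apply unit_mul; try apply epow_unit; apply u3_unit.
  - apply ofZ_not_lam; auto.
  - apply ofZ_not_lam; auto.
  - apply ofZ_not_lam; auto.
  - apply coprime_ofZ; auto.
  - rewrite epow_add. change (epow lam 2) with (lam*(lam*e1))%E.
    transitivity (u3 * lam * lam * ((epow u3 j * epow u3 j * epow u3 j) * epow lam (6 * j) * (ofZ u' * ofZ u' * ofZ u')))%E; [|ring].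
    rewrite <- cube_val, <- Hu, <- three_lam, <- !ofZ_mul, <- ofZ_add. f_equal. lia.
Qed.

Open Scope Z_scope.

Lemma H3 x1 x2 x3 al : x1 + x2 + x3 = 0 -> zcop x1 x2 -> zcop x2 x3 -> zcop x1 x3 ->
  x1*x2*x3 = 3*(al*al*al) -> (3 | x1) -> al = 0.
Proof. intros Hs H12 H23 H13 Hp [y1 Hy1]. subst x1.
  assert (Hp' : y1*x2*x3 = al*al*al) by lia.
  assert (Hc12 : zcop y1 x2) by (destruct H12 as [u [v H]]; exists (u*3), v; lia).
  assert (Hc13 : zcop y1 x3) by (destruct H13 as [u [v H]]; exists (u*3), v; lia).
  destruct (zcube y1 (x2*x3) al) as [c1 Hc1]; [apply zcop_mul; auto| rewrite <- Hp'; ring|].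
  destruct (zcube x2 (y1*x3) al) as [c2 Hc2]; [apply zcop_mul; auto; apply zcop_sym; auto| rewrite <- Hp'; ring|].
  destruct (zcube x3 (y1*x2) al) as [c3 Hc3]; [apply zcop_mul; apply zcop_sym; auto| rewrite <- Hp'; ring|].
  assert (Hc : zcop c2 c3) by (destruct H23 as [u [v H]]; exists (u*c2*c2), (v*c3*c3); rewrite <- H, Hc2, Hc3; ring).
  assert (c1 = 0).
  { assert (- c1 = 0); [|lia]. apply (F3core c2 c3 (- c1) Hc). rewrite <- Hc2, <- Hc3. nia. }
  subst c1. assert (al*al*al = 0) by (rewrite <- Hp', Hc1; ring).
  repeat (apply Z.mul_eq_0 in H; destruct H as [H|H]); auto.
Qed.

Lemma F2fin a b be s : (s = 1 \/ s = -1) -> a*a*a + b*b*b - 3*(a*b*b) = s ->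
  a*a*b - a*b*b = 3*(be*be*be) -> be = 0.
Proof. intros Hs HP Hk.
  assert (Hab : zcop a b) by (exists (s*(a*a - 3*(b*b))), (s*(b*b)); destruct Hs; subst; nia).
  assert (H12 : zcop a (-b)) by (destruct Hab as [u [v H]]; exists u, (-v); lia).
  assert (H23 : zcop (-b) (b - a)) by (destruct Hab as [u [v H]]; exists (-u - v), (-u); lia).
  assert (H13 : zcop a (b - a)) by (destruct Hab as [u [v H]]; exists (u + v), v; lia).
  assert (Hp : a * (-b) * (b - a) = 3*(be*be*be)) by (rewrite <- Hk; ring).
  assert (H3d : (3 | a * (-b) * (b - a))) by (rewrite Hp; apply Z.divide_factor_l).
  apply prime_mult in H3d; [|exact prime_3]. destruct H3d as [H3d|H3d]; [apply prime_mult in H3d; [|exact prime_3]; destruct H3d as [H3d|H3d]|].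
  - apply (H3 a (-b) (b - a) be); auto; lia.
  - apply (H3 (-b) (b - a) a be); auto; first [lia | apply zcop_sym; auto | rewrite <- Hp; ring].
  - apply (H3 (b - a) a (-b) be); auto; first [lia | apply zcop_sym; auto | rewrite <- Hp; ring].
Qed.

Open Scope E_scope.
Lemma cube_formula a b : (a,b)*(a,b)*(a,b) = ((a*a*a + b*b*b - 3*(a*b*b))%Z, (3*(a*a*b - a*b*b))%Z).
Proof. cbv [emul fst snd]. f_equal; ring. Qed.
Close Scope E_scope.

Lemma F2 y al g : y - 1 = 9*(al*al*al) -> y*y - y + 1 = g*g*g -> al = 0.
Proof. intros H1 H2.
  assert (Hy : y = 9*(al*al*al) + 1) by lia. subst y.
  set (y := 9*(al*al*al) + 1) in *.
  set (t := 3*(al*al*al)*y).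
  destruct (cube_lemma (ofZ g) (y, 1) (y - 1, -1)) as [u [[a b] [Hu Hab]]].
  - exists ((y - 1, -1)%Z + ofZ t * (y,1)%Z - ofZ (2*t) * (y-1,-1)%Z)%E, (ofZ t * (y - 1, -1)%Z)%E.
    unfold t, y. cbv [emul eadd eopp esub ofZ e1 fst snd]. f_equal; ring.
  - cbv [emul ofZ fst snd]. f_equal; [transitivity (y*y - y + 1); [ring| rewrite H2; ring]| ring].
  - rewrite cube_formula in Hab. apply unit_N in Hu.
    set (P := a*a*a + b*b*b - 3*(a*b*b)) in *. set (k := a*a*b - a*b*b) in *.
    destruct (units_enum u Hu) as [E|[E|[E|[E|[E|E]]]]]; subst u;
      pose proof (f_equal fst Hab) as Ha; pose proof (f_equal snd Hab) as Hb; clear Hab; unfold emul in Ha, Hb; cbn [fst snd] in Ha, Hb; try (exfalso; lia).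
    + assert (- al = 0); [|lia]. apply (F2fin a b (- al) 1); [left; auto| lia| unfold k in *; nia].
    + apply (F2fin a b al (-1)); [right; auto| lia| unfold k in *; nia].
Qed.

Open Scope Z_scope.

Lemma cube_lt a b : a < b -> a*a*a < b*b*b.
Proof. intros H. assert (0 < b*b + a*b + a*a).
  { assert (4*(b*b + a*b + a*a) = (2*b+a)*(2*b+a) + 3*(a*a)) by ring.
    destruct (Z.eq_dec a 0); [subst; nia|]. assert (0 < a*a) by nia. nia. }
  assert (b*b*b - a*a*a = (b - a)*(b*b + a*b + a*a)) by ring. nia. Qed.
Lemma cube_inj_lt a b : a*a*a < b*b*b -> a < b.
Proof. intros H. destruct (Z.lt_ge_cases a b); auto. destruct (Z.eq_dec a b); [subst; lia|].
  assert (b < a) by lia. apply cube_lt in H1. lia. Qed.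
Lemma cbetween a d : a*a*a < d*d*d -> d*d*d < (a+1)*(a+1)*(a+1) -> False.
Proof. intros H1 H2. apply cube_inj_lt in H1. apply cube_inj_lt in H2. lia. Qed.

Lemma L_cub1 y d : y*y*y + 1 = d*d*d -> y = 0 \/ y = -1.
Proof. intros H. destruct (Z.lt_trichotomy y 0) as [Hy|[Hy|Hy]]; [|left; auto|].
  - destruct (Z.eq_dec y (-1)); [right; auto|]. exfalso. apply (cbetween y d); nia.
  - exfalso. apply (cbetween y d); nia.
Qed.
Lemma L_cub2 y d : y*y*y - 1 = d*d*d -> y = 0 \/ y = 1.
Proof. intros H. destruct (L_cub1 (-y) (-d)); [nia| left; lia| right; lia]. Qed.

Lemma L_bc f g : g*g*g = f*f*f*f*f*f + f*f*f + 1 -> f = 0 \/ f = -1.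
Proof. intros H. destruct (Z.lt_trichotomy f 0) as [Hf|[Hf|Hf]]; [|left; auto|].
  - destruct (Z.eq_dec f (-1)); [right; auto|]. exfalso. apply (cbetween (f*f - 1) g).
    + rewrite H. assert (f <= -2) by lia. assert (f*f >= 4) by nia.
      assert (3*(f*f)*(f*f-1) + f*f*f + 2 > 0) by nia. nia.
    + rewrite H. assert (f*f*f < -1) by nia. nia.
  - exfalso. apply (cbetween (f*f) g).
    + rewrite H. assert (f*f*f > 0) by nia. nia.
    + rewrite H. assert (f*f*f < 3*(f*f*f*f)) by nia. assert (0 < f*f) by nia. nia.
Qed.

Lemma L_dd_pos y f g : 0 < y -> f*f*f = y*y + y + 1 -> g*g*g = y*y - y + 1 -> False.
Proof. intros Hy Hf Hg.
  assert (g < f) by (apply cube_inj_lt; lia).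
  assert (g + 1 <= f) by lia.
  assert (0 < g) by (apply cube_inj_lt; simpl; nia).
  assert ((g+1)*(g+1)*(g+1) <= f*f*f) by (destruct (Z.eq_dec (g+1) f); [subst; lia| apply Z.lt_le_incl, cube_lt; lia]).
  assert (2*y >= 3*(g*g) + 3*g + 1) by nia.
  assert (2*(g*g*g) >= y*y) by nia.
  assert (4*(y*y) >= 9*(g*g*(g*g))) by nia.
  assert (8*(g*g*g) >= 9*(g*g*g*g)) by nia.
  nia.
Qed.
Lemma L_dd y f g : f*f*f = y*y + y + 1 -> g*g*g = y*y - y + 1 -> y = 0.
Proof. intros Hf Hg. destruct (Z.lt_trichotomy y 0) as [Hy|[Hy|Hy]]; auto; exfalso.
  - apply (L_dd_pos (-y) g f); [lia| rewrite Hg; ring| rewrite Hf; ring].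
  - apply (L_dd_pos y f g); auto.
Qed.

Open Scope Z_scope.

Lemma zcop_mul_l a b c : zcop a c -> zcop b c -> zcop (a*b) c.
Proof. intros. apply zcop_sym. apply zcop_mul; apply zcop_sym; auto. Qed.
Lemma prime_dvd_cube p d : prime p -> (p | d*d*d) -> (p | d).
Proof. intros Hp H. repeat (apply prime_mult in H; [|exact Hp]; destruct H as [H|H]); auto. Qed.
Lemma prime_ge2 p : prime p -> 2 <= p.
Proof. intros H. destruct H; lia. Qed.

Lemma K2 F G q e : zcop F G -> F*G = q*q*(e*e*e) -> prime q -> (exists d, F = d*d*d) \/ (exists d, G = d*d*d).
Proof. intros Hc H Hq. destruct (classic (q | F)) as [HF|HF].
  - right. assert (HG : ~ (q | G)).
    { intro HG. destruct Hc as [u [v Huv]]. assert (q | 1) by (rewrite <- Huv; apply Z.divide_add_r; apply Z.divide_mul_r; auto).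
      apply Z.divide_1_r in H0. pose proof (prime_ge2 q Hq). lia. }
    apply (zcube G (F*q) (q*e)); [apply zcop_mul; [apply zcop_sym; auto| apply zcop_sym, zprime_cop; auto]| transitivity ((F*G)*q); [ring| rewrite H; ring]].
  - left. apply (zcube F (G*q) (q*e)); [apply zcop_mul; [auto| apply zcop_sym, zprime_cop; auto]| transitivity ((F*G)*q); [ring| rewrite H; ring]].
Qed.

Lemma L_two f g : g*g*g = f*f*f + 2 -> f = -1.
Proof. intros H. destruct (Z.eq_dec f (-1)); auto. exfalso.
  destruct (Z.eq_dec f 0). { subst. apply (cbetween 1 g); lia. }
  apply (cbetween f g); [lia|]. rewrite H. nia. Qed.

Lemma zcop_lin3 y : ~ (3 | y + 1) -> zcop (y + 1) (y*y - y + 1).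
Proof. intros H. destruct (zprime_cop 3 (y+1) prime_3 H) as [a [b Hab]].
  exists (b - a*(y-2)), a. nia. Qed.

Lemma final_step y p q d e : (exists x, y = 2*x) -> y <> 0 -> (y mod 3 = 0 \/ y mod 3 = 1) ->
  prime p -> prime q -> y*y*y - 1 = p*p*(d*d*d) -> y*y*y + 1 = q*q*(e*e*e) -> False.
Proof.
  intros [x Hx] Hy0 Hmod Hp Hq HU HV.
  assert (Hmod3 := Z.div_mod y 3 ltac:(lia)). set (kk := y / 3) in *.
  assert (HV2 : (exists g, y + 1 = g*g*g) \/ (exists g, y*y - y + 1 = g*g*g)).
  { apply (K2 _ _ q e); auto; [| rewrite <- HV; ring].
    apply zcop_lin3. intros [m Hm]. lia. }
  destruct Hmod as [H0|H1].
  - assert (HU2 : (exists f, y - 1 = f*f*f) \/ (exists f, y*y + y + 1 = f*f*f)).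
    { apply (K2 _ _ p d); auto; [| rewrite <- HU; ring].
      pose proof (zcop_lin3 (-y)) as Hl. destruct Hl as [u [v Huv]].
      { intros [m Hm]. lia. }
      exists (-u), v. nia. }
    destruct HU2 as [[f Hf]|[f Hf]]; destruct HV2 as [[g Hg]|[g Hg]].
    + assert (f = -1) by (apply (L_two f g); lia). subst. lia.
    + assert (f = 0 \/ f = -1) as [E|E] by (apply (L_bc f g); rewrite <- Hg; replace y with (f*f*f + 1) by lia; ring); subst; lia.
    + assert (- g = 0 \/ - g = -1) as [E|E] by (apply (L_bc (-g) f); rewrite <- Hf; replace y with (g*g*g - 1) by lia; ring); 
        assert (g = 0 \/ g = 1) as [E2|E2] by lia; subst; lia.
    + apply Hy0. apply (L_dd y f g); auto.
  - set (h := 3*(kk*kk) + 3*kk + 1).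
    assert (Hy : y = 3*kk + 1) by lia.
    assert (HUk : y*y*y - 1 = 9 * kk * h) by (unfold h; rewrite Hy; ring).
    assert (Hch : zcop kk h) by (exists (-3*(kk+1)), 1; unfold h; ring).
    assert (Hh3 : ~ (3 | h)) by (intros [m Hm]; unfold h in Hm; lia).
    assert (HF1 : forall b, h = b*b*b -> kk = 0 \/ kk = -1).
    { intros b Hb. destruct (F1core (kk+1) b) as [E|E]; [rewrite <- Hb; unfold h; ring| right; lia| left; lia]. }
    destruct (Z.eq_dec p 3) as [Hp3|Hp3].
    + subst p. assert (kk * h = d*d*d) by lia.
      destruct (zcube h kk d) as [b Hb]; [apply zcop_sym; auto| lia|].
      destruct (HF1 b Hb) as [E|E]; [lia|].
      assert (y = -2) by lia. subst y.
      assert (Hqq : (q*q | 7)) by (exists (- (e*e*e)); lia).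
      pose proof (prime_ge2 q Hq). assert (q*q <= 7) by (apply Z.divide_pos_le; auto; lia).
      assert (q = 2) by nia. subst q. destruct Hqq as [m Hm]. lia.
    + assert (H3d : (3 | d)).
      { apply prime_dvd_cube; [exact prime_3|].
        assert (H9 : (3 | p*p*(d*d*d))) by (rewrite <- HU, HUk; exists (3*kk*h); ring).
        apply prime_mult in H9; [|exact prime_3]. destruct H9 as [H9|H9]; auto.
        exfalso. apply prime_mult in H9; [|exact prime_3]. destruct H9 as [H9|H9];
        apply Hp3; symmetry; apply prime_div_prime; auto; exact prime_3. }
      destruct H3d as [d1 Hd1]. subst d.
      assert (Hk3 : kk * h = 3 * (p*p*(d1*d1*d1))) by lia.
      assert (H3k : (3 | kk)).
      { assert (3 | kk * h) by (rewrite Hk3; apply Z.divide_factor_l).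
        apply prime_mult in H; [|exact prime_3]. destruct H; [auto| contradiction]. }
      destruct H3k as [k1 Hk1].
      assert (Hk1h : k1 * h = p*p*(d1*d1*d1)) by (rewrite Hk1 in Hk3; lia).
      assert (Hc1 : zcop k1 h) by (destruct Hch as [u [v Huv]]; exists (u*3), v; rewrite <- Huv, Hk1; ring).
      destruct (K2 k1 h p d1 Hc1 Hk1h Hp) as [[al Hal]|[b Hb]].
      * assert (Hy9 : y - 1 = 9*(al*al*al)) by lia.
        destruct HV2 as [[g Hg]|[g Hg]].
        -- assert (Hg3 : ~ (3 | g)).
           { intro H3g. assert (3 | g*g*g) by (repeat apply Z.divide_mul_l; auto).
             destruct H as [m Hm]. lia. }
           destruct (cube_mod9 g Hg3) as [t Ht]. lia.
        -- assert (al = 0) by (apply (F2 y al g); auto). subst al. lia.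
      * destruct (HF1 b Hb); lia.
Qed.

Open Scope Z_scope.

Lemma not_both r U V : prime r -> zcop U V -> (r | U) -> (r | V) -> False.
Proof. intros Hr [u [v Huv]] HU HV. assert (r | 1) by (rewrite <- Huv; apply Z.divide_add_r; apply Z.divide_mul_r; auto).
  apply Z.divide_1_r in H. pose proof (prime_ge2 r Hr). lia. Qed.

Lemma K1 M N s t c : zcop M N -> M * N = s*s*(t*t)*(c*c*c) -> prime s -> prime t ->
  ~ (s | M) -> ~ (t | M) -> exists d, M = d*d*d.
Proof. intros Hc H Hs Ht HsM HtM. apply (zcube M (N*s*t) (s*t*c)).
  - apply zcop_mul; [apply zcop_mul|]; auto; apply zcop_sym, zprime_cop; auto.
  - transitivity ((M*N)*s*t); [ring| rewrite H; ring]. Qed.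

Lemma extract p U D : prime p -> p * U = D*D*D -> exists d, U = p*p*(d*d*d).
Proof. intros Hp H. assert (p | D) by (apply prime_dvd_cube; auto; rewrite <- H; apply Z.divide_factor_l).
  destruct H0 as [d Hd]. subst D. exists d. pose proof (prime_ge2 p Hp).
  apply (Z.mul_reg_l _ _ p); [lia|]. rewrite H. ring. Qed.

Lemma split_step U V p q a : zcop U V -> U*V = p*p*(q*q)*(a*a*a) -> prime p -> prime q ->
  (p | U) -> (q | V) -> exists d e, U = p*p*(d*d*d) /\ V = q*q*(e*e*e).
Proof. intros Hc H Hp Hq HpU HqV.
  assert (HpV : ~ (p | V)) by (intro HH; exact (not_both p U V Hp Hc HpU HH)).
  assert (HqU : ~ (q | U)) by (intro HH; exact (not_both q U V Hq Hc HH HqV)).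
  assert (Hpq : ~ (p | q)) by (intro Hd; apply prime_div_prime in Hd; auto; subst; contradiction).
  assert (Hqp : ~ (q | p)) by (intro Hd; apply prime_div_prime in Hd; auto; subst; contradiction).
  destruct (zcube (p*U) (q*V) (p*q*a)) as [D HD].
  { apply zcop_mul_l; apply zcop_mul.
    - apply zprime_cop; auto.
    - apply zprime_cop; auto.
    - apply zcop_sym, zprime_cop; auto.
    - auto. }
  { transitivity (p*q*(U*V)); [ring| rewrite H; ring]. }
  destruct (zcube (q*V) (p*U) (p*q*a)) as [E HE].
  { apply zcop_mul_l; apply zcop_mul.
    - apply zprime_cop; auto.
    - apply zprime_cop; auto.
    - apply zcop_sym, zprime_cop; auto.
    - apply zcop_sym; auto. }
  { transitivity (p*q*(U*V)); [ring| rewrite H; ring]. }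
  destruct (extract p U D Hp HD) as [d Hd]. destruct (extract q V E Hq HE) as [e He].
  exists d, e; auto. Qed.

Lemma core_main y p q a : (exists x, y = 2*x) -> y <> 0 -> (y mod 3 = 0 \/ y mod 3 = 1) ->
  prime p -> prime q -> (y*y*y - 1) * (y*y*y + 1) = p*p*(q*q)*(a*a*a) -> False.
Proof.
  intros [x Hx] Hy0 Hmod Hp Hq H.
  set (U := y*y*y - 1) in *. set (V := y*y*y + 1) in *.
  assert (Hc : zcop U V) by (exists (4*(x*x*x)), (-(4*(x*x*x) - 1)); unfold U, V; rewrite Hx; ring).
  assert (HpUV : (p | U * V)) by (rewrite H; exists (p*(q*q)*(a*a*a)); ring).
  assert (HqUV : (q | U * V)) by (rewrite H; exists (p*p*q*(a*a*a)); ring).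
  apply prime_mult in HpUV; auto. apply prime_mult in HqUV; auto.
  destruct HpUV as [HpU|HpV]; destruct HqUV as [HqU|HqV].
  - assert (HpV : ~ (p | V)) by (intro HH; exact (not_both p U V Hp Hc HpU HH)).
    assert (HqV : ~ (q | V)) by (intro HH; exact (not_both q U V Hq Hc HqU HH)).
    destruct (K1 V U p q a (zcop_sym _ _ Hc) ltac:(rewrite <- H; ring) Hp Hq HpV HqV) as [d Hd].
    destruct (L_cub1 y d); [unfold V in Hd; lia| lia| lia].
  - destruct (split_step U V p q a Hc H Hp Hq HpU HqV) as [d [e [Hd He]]].
    apply (final_step y p q d e); eauto.
  - destruct (split_step U V q p a Hc ltac:(rewrite H; ring) Hq Hp HqU HpV) as [d [e [Hd He]]].
    apply (final_step y q p d e); eauto.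
  - assert (HpU : ~ (p | U)) by (intro HH; exact (not_both p U V Hp Hc HH HpV)).
    assert (HqU : ~ (q | U)) by (intro HH; exact (not_both q U V Hq Hc HH HqV)).
    destruct (K1 U V p q a Hc H Hp Hq HpU HqU) as [d Hd].
    destruct (L_cub2 y d); [unfold U in Hd; lia| lia| lia].
Qed.

Theorem corollary1 :
  ~ (exists x a p q : Z, prime p /\ prime q /\
       (2 * x) ^ 6 - 1 = p ^ 2 * q ^ 2 * a ^ 3).
Proof.
  intros [x [a [p [q [Hp [Hq H]]]]]].
  assert (H' : forall y, y = 2*x \/ y = -(2*x) -> (y*y*y - 1) * (y*y*y + 1) = p*p*(q*q)*(a*a*a)).
  { intros y [E|E]; subst y; (transitivity ((2*x)^6 - 1); [ring| rewrite H; ring]). }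
  destruct (Z.eq_dec x 0) as [Hx0|Hx0].
  { subst x. specialize (H' 0 (or_introl eq_refl)).
    assert (Hd : (p*p | 1)) by (exists (-(q*q*(a*a*a))); lia).
    pose proof (prime_ge2 p Hp). assert (p*p <= 1) by (apply Z.divide_pos_le; auto; lia). nia. }
  pose proof (Z.mod_pos_bound (2*x) 3 ltac:(lia)).
  destruct (Z.eq_dec ((2*x) mod 3) 2) as [H2|H2].
  - apply (core_main (-(2*x)) p q a); auto.
    + exists (-x); ring.
    + lia.
    + right. rewrite Z_mod_nz_opp_full; rewrite H2; [reflexivity| lia].
  - apply (core_main (2*x) p q a); auto.
    + exists x; ring.
    + lia.
    + lia.
Qed.
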